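(* For $\beta\in S^2$ and $\lambda\ge 0$ let $g_\beta^\lambda:S^2\to S^2$ be defined as below. Let $K,L\subset S^2$ be compact subsets such that $z\neq-\beta$ for all $(\beta,z)\in K\times L$, and let $\varepsilon>0$. Then there exists $\delta\in(0,1)$ such that \[|g_\beta^\lambda(z)-\beta|<\varepsilon\quad\text{for all }(\lambda,\beta,z)\in[0,\delta]\times K\times L.\]
   Context: $S^2$ is the unit sphere in $\mathbb R^3$ and $\langle\cdot,\cdot\rangle$ the Euclidean inner product. For $\beta\in S^2$ let $H_\beta=\{y\in\mathbb R^3:\langle y-\beta,\beta\rangle=0\}$ be the tangent plane at $\beta$, and let $\pi_\beta:H_\beta\cup\{\infty\}\to S^2$ be the stereographic projection $\pi_\beta(y)=\frac{4}{|\beta+y|^2}(\beta+y)-\beta$ for $y\in H_\beta$, $\pi_\beta(\infty)=-\beta$ (a homeomorphism). For $\lambda>0$ let $D_\beta^\lambda(y)=\beta+\lambda(y-\beta)$ on $H_\beta$, $D_\beta^\lambda(\infty)=\infty$, and set $g_\beta^\lambda=\pi_\beta^{-1}\circ D_\beta^\lambda\circ\pi_\beta$ (here $\pi_\beta^{-1}$ denotes the inverse of $\pi_\beta$, so $g_\beta^\lambda:S^2\to S^2$). For $\lambda=0$ set $g_\beta^0(z)=-\beta$ if $z=-\beta$ and $g_\beta^0(z)=\beta$ otherwise. *)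

(* Defs.v *)
From HB Require Import structures.
From mathcomp Require Import all_boot all_order all_algebra.
From mathcomp Require Import all_classical all_reals all_analysis.
Set Implicit Arguments. Unset Strict Implicit. Unset Printing Implicit Defensive.
Import Order.TTheory GRing.Theory Num.Theory.
Import numFieldNormedType.Exports.
Local Open Scope classical_set_scope.
Local Open Scope ring_scope.

Section Defs.
Variable R : realType.
Local Notation V := 'rV[R]_3.

Definition dot (u v : V) : R := \sum_(i < 3) u ord0 i * v ord0 i.
Definition enorm (u : V) : R := Num.sqrt (dot u u).

Definition S2 : set V := [set x | enorm x = 1].

Definition Hpl (b : V) : set V := [set y | dot (y - b) b = 0].

(* H_beta u {oo} is modelled as option V, with None = oo *)
Definition stereo (b : V) (p : option V) : V :=
  match p with
  | Some y => (4 / (enorm (b + y)) ^+ 2) *: (b + y) - b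
  | None => - b
  end.

Definition in_Hoo (b : V) (p : option V) : Prop :=
  match p with Some y => Hpl b y | None => True end.

Definition stereo_inv (b : V) (z : V) : option V :=
  xget None [set p | in_Hoo b p /\ stereo b p = z].

Definition dil (b : V) (lam : R) (p : option V) : option V :=
  match p with
  | Some y => Some (b + lam *: (y - b))
  | None => None
  end.

(* g_beta^lambda; for lambda = 0 the special definition of the paper *)
Definition gmap (b : V) (lam : R) (z : V) : V :=
  if lam == 0 then (if z == - b then - b else b)
  else stereo b (dil b lam (stereo_inv b z)).

End Defs.

(* Main.v *)
Require Import Defs.
From HB Require Import structures.
From mathcomp Require Import all_boot all_order all_algebra.
From mathcomp Require Import all_classical all_reals all_analysis.
From mathcomp Require Import ring lra.
Import Order.TTheory GRing.Theory Num.Theory.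
Import numFieldNormedType.Exports.
Local Open Scope classical_set_scope.
Local Open Scope ring_scope.

Set Implicit Arguments.
Section Alg.
Variable R : realType.
Local Notation V := 'rV[R]_3.

Ltac dexp := rewrite /dot !big_ord_recr !big_ord0 /=.

Lemma dotC (u v : V) : dot u v = dot v u.
Proof. dexp; ring. Qed.

Lemma dot_comb2 (a c : R) (u w : V) :
  dot (a *: u + c *: w) (a *: u + c *: w) =
  a ^+ 2 * dot u u + 2 * a * c * dot u w + c ^+ 2 * dot w w.
Proof. dexp; rewrite !mxE; ring. Qed.

Lemma dot_comb1 (a c : R) (u w : V) :
  dot (a *: u + c *: w) u = a * dot u u + c * dot w u.
Proof. dexp; rewrite !mxE; ring. Qed.

Lemma dot_ge0 (u : V) : 0 <= dot u u.
Proof. dexp; nra. Qed.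

Lemma dot00 : dot (0 : V) 0 = 0.
Proof. dexp; rewrite !mxE; ring. Qed.

Lemma enorm2 (u : V) : enorm u ^+ 2 = dot u u.
Proof. by rewrite /enorm sqr_sqrtr // dot_ge0. Qed.

Lemma norm_dot (v : V) : `|v| ^+ 2 <= dot v v.
Proof.
have [->|] := eqVneq `|v| 0; first by rewrite expr0n /= dot_ge0.
move=> /(@mx_norm_neq0 R 1 3) [[i j] /= E].
have -> : `|v| = `|v i j| by exact: E.
rewrite (ord1 i) real_normK ?num_real //.
rewrite /dot (bigD1 j) //= expr2 lerDl; apply: sumr_ge0 => k _; nra.
Qed.


Lemma coreB (b z : V) (lam : R) : dot b b = 1 -> dot z z = 1 -> 0 < 1 + dot z b -> lam != 0 ->
  dot (gmap b lam z - b) (gmap b lam z - b) <= lam ^+ 2 * (8 / (1 + dot z b)).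
Proof.
move=> hb hz hc hl; rewrite /gmap (negbTE hl).
have hzb : dot b z = dot z b by rewrite dotC.
move: hc hzb; set c := dot z b => hc hzb.
have hc0 : 1 + c != 0 by rewrite gt_eqF.
pose k := 2 / (1 + c).
pose t0 := k *: (z - c *: b).
have P0 : in_Hoo b (Some (b + t0)) /\ stereo b (Some (b + t0)) = z.
  split.
    rewrite /= /Hpl /=.
    have -> : b + t0 - b = (- (k * c)) *: b + k *: z.
      by apply/rowP => i; rewrite /t0 !mxE; ring.
    by rewrite dot_comb1 hb -/c; ring.
  rewrite /=.
  have -> : b + (b + t0) = (2 - k * c) *: b + k *: z.
    by apply/rowP => i; rewrite /t0 !mxE; ring.
  rewrite enorm2 dot_comb2 hb hzb.
  have -> : 4 / ((2 - k * c) ^+ 2 * 1 + 2 * (2 - k * c) * k * c + k ^+ 2 * dot z z) = (1 + c) / 2.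
    rewrite hz.
    have -> : (2 - k * c) ^+ 2 * 1 + 2 * (2 - k * c) * k * c + k ^+ 2 * 1 = 8 / (1 + c).
      by rewrite /k; field.
    by field.
  by apply/rowP => i; rewrite !mxE /k; field.
rewrite /stereo_inv.
have := @xgetPex _ None [set p | in_Hoo b p /\ stereo b p = z] (ex_intro _ _ P0).
case: xget => [y|] [/= Hy Sy]; last first.
  move: hc; rewrite /c -Sy.
  have -> : - b = (-1) *: b + 0 *: b by apply/rowP => i; rewrite !mxE; ring.
  by rewrite dot_comb1 hb; lra.
pose t := y - b.
have ey : y = b + t by rewrite /t addrC subrK.
move: Hy Sy; rewrite /Hpl -/t ey => Ht Sy.
clearbody t.
have htb : dot b t = 0 by move: Ht; rewrite /= [b + t]addrC addrK dotC.
have s0 : 0 <= dot t t by exact: dot_ge0.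
move: Sy s0; set s := dot t t => Sy s0.
have hq : 0 <= lam ^+ 2 by exact: sqr_ge0.
move: Sy; rewrite /stereo.
have -> : b + (b + t) = 2 *: b + 1 *: t by apply/rowP => i; rewrite !mxE; ring.
rewrite enorm2 dot_comb2 hb htb -/s => Sy.
have hs4 : 4 + s != 0 by rewrite gt_eqF //; lra.
have hls : 4 + lam ^+ 2 * s != 0 by rewrite gt_eqF //; have := mulr_ge0 hq s0; lra.
have hcs : 1 + c = 8 / (4 + s).
  rewrite /c -Sy.
  have -> : (4 / (2 ^+ 2 * 1 + 2 * 2 * 1 * 0 + 1 ^+ 2 * s)) *: (2 *: b + 1 *: t) - b
     = (8 / (4 + s) - 1) *: b + (4 / (4 + s)) *: t.
    by apply/rowP => i; rewrite !mxE; field.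
  by rewrite dot_comb1 hb dotC htb; field.
rewrite hcs.
have -> : b + (b + lam *: t) = 2 *: b + lam *: t by apply/rowP => i; rewrite !mxE; ring.
rewrite enorm2 dot_comb2 hb htb -/s.
have -> : (4 / (2 ^+ 2 * 1 + 2 * 2 * lam * 0 + lam ^+ 2 * s)) *: (2 *: b + lam *: t) - b - b
   = (8 / (4 + lam ^+ 2 * s) - 2) *: b + (4 * lam / (4 + lam ^+ 2 * s)) *: t.
  by apply/rowP => i; rewrite !mxE; field.
rewrite dot_comb2 hb htb -/s.
have -> : lam ^+ 2 * (8 / (8 / (4 + s))) = lam ^+ 2 * (4 + s) by field.
move: hls hq; set q := lam ^+ 2 => hls hq.
have -> : (8 / (4 + q * s) - 2) ^+ 2 * 1 +
  2 * (8 / (4 + q * s) - 2) * (4 * lam / (4 + q * s)) * 0 +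
  (4 * lam / (4 + q * s)) ^+ 2 * s = 4 * q * s / (4 + q * s) by rewrite /q; field.
have hp : 0 < 4 + q * s by have := mulr_ge0 hq s0; lra.
rewrite ler_pdivrMr //.
have := mulr_ge0 hq s0; have := mulr_ge0 (mulr_ge0 hq s0) s0; nra.
Qed.
End Alg.
Lemma lowA (R : realType) (K L : set 'rV[R]_3) :
  compact K -> compact L -> (forall b z, K b -> L z -> z <> - b) ->
  exists e : R, 0 < e /\ forall b z, K b -> L z -> e <= `|z + b|.
Proof.
move=> cK cL hKL.
pose f := fun p : 'rV[R]_3 * 'rV[R]_3 => `|p.2 + p.1|.
have fc : continuous f.
  move=> p; apply: continuous_comp; last exact: norm_continuous.
  apply: cvgD; [exact: cvg_snd | exact: cvg_fst].
have cC : compact (f @` (K `*` L)).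
  apply: continuous_compact; last exact: compact_setX.
  exact: continuous_subspaceT.
have clC : closed (f @` (K `*` L)) by apply: compact_closed => //; exact: hausdorff_space.
have : open (~` (f @` (K `*` L))) by exact: closed_openC.
move=> oC.
have C0 : (~` (f @` (K `*` L))) 0.
  move=> [[b z] [/= Kb Lz]]; rewrite /f /= => /normr0_eq0 /eqP.
  by rewrite addr_eq0 => /eqP; apply: hKL.
have /nbhs_ballP [e /= e0 he] : nbhs (0:R) (~` (f @` (K `*` L))) by apply: open_nbhs_nbhs.
exists e; split => // b z Kb Lz.
rewrite leNgt; apply/negP => lt.
apply: (he (`|z + b|)); last by exists (b, z).
by rewrite /ball /= sub0r normrN normr_id.
Qed.

Unset Implicit Arguments.
Theorem lemma3p6 (R : realType) (K L : set 'rV[R]_3) (eps : R) :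
  K `<=` @S2 R -> L `<=` @S2 R -> compact K -> compact L ->
  (forall b z, K b -> L z -> z <> - b) -> 0 < eps ->
  exists delta : R, 0 < delta < 1 /\
    forall (lam : R) (b z : 'rV[R]_3), 0 <= lam <= delta -> K b -> L z ->
      enorm (gmap b lam z - b) < eps.
Proof.
move=> KS LS cK cL hKL he.
have [e [e0 hE]] := lowA cK cL hKL.
have hd0 : 0 < Num.min (1/2) (eps * e / 8).
  by rewrite lt_min; apply/andP; split; [lra | apply: divr_gt0 => //; apply: mulr_gt0].
have hd1 : Num.min (1/2) (eps * e / 8) <= 1/2 by rewrite ge_min lexx.
have hd2 : Num.min (1/2) (eps * e / 8) <= eps * e / 8 by rewrite ge_min lexx orbT.
exists (Num.min (1/2) (eps * e / 8)); split.
  by rewrite hd0 /=; lra.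
move: hd0 hd1 hd2; set d := Num.min _ _ => hd0 hd1 hd2.
move=> lam b z /andP[l0 ld] Kb Lz.
have hb : dot b b = 1 by rewrite -enorm2 (KS b Kb) expr1n.
have hz : dot z z = 1 by rewrite -enorm2 (LS z Lz) expr1n.
have hn := @norm_dot R (z + b).
have hN := hE b z Kb Lz.
have hzb : dot (z + b) (z + b) = 2 + 2 * dot z b.
  have -> : z + b = 1 *: z + 1 *: b by apply/rowP => i; rewrite !mxE; ring.
  by rewrite dot_comb2 hz hb dotC; ring.
have hc2 : e ^+ 2 <= 2 * (1 + dot z b).
  have : 0 <= `|z + b| by [].
  move: hn; rewrite hzb; nra.
have he2 : 0 < e ^+ 2 by exact: exprn_gt0.
have hc : 0 < 1 + dot z b by lra.
have [->|hl] := eqVneq lam 0.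
  rewrite /gmap eqxx.
  have -> : (z == - b) = false by apply/eqP; exact: hKL.
  by rewrite subrr /enorm dot00 sqrtr0.
have hC := @coreB R b z lam hb hz hc hl.
rewrite /enorm -[eps]gtr0_norm // -sqrtr_sqr ltr_sqrt ?exprn_gt0 //.
apply: (le_lt_trans hC).
move: hc2 hc; set c := dot z b => hc2 hc.
have hw : 8 / (1 + c) * (1 + c) = 8 by field; rewrite gt_eqF.
move: hw; set w := 8 / (1 + c) => hw.
have w0 : 0 <= w by rewrite /w; apply: divr_ge0 => //; lra.
have hwe : w * e ^+ 2 <= 16 by nra.
have hl8 : lam * 8 <= eps * e by lra.
have hl0 : 0 <= lam * 8 by lra.
have h64 : (lam * 8) ^+ 2 <= (eps * e) ^+ 2 by rewrite ler_sqr ?nnegrE //; nra.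
have : (lam * 8) ^+ 2 * w <= (eps * e) ^+ 2 * w by exact: ler_wpM2r.
rewrite exprMn.
have : eps ^+ 2 * (w * e ^+ 2) <= eps ^+ 2 * 16 by apply: ler_wpM2l => //; exact: sqr_ge0.
have : 0 < eps ^+ 2 by exact: exprn_gt0.
nra.
Qed.
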